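(* Assume Assumptions A, B, C and D hold (with constants $L_\phi,G,V,H>0$), and let $w^{(t)}$, $0\le t\le T$, be generated by Algorithm 2, where $T=\beta/\varepsilon$ for a constant $\beta>0$ (assumed to be an integer). Let $\eta^{(t)}=D\sqrt{\varepsilon}$ for some $D>0$, and $\alpha_i^{(t)}=(1+\varepsilon)^t\alpha_i^{(0)}$ with $\alpha_i^{(0)}=\frac{\alpha}{e^{\beta}L_\phi}$ for some $\alpha\in(0,\tfrac14)$. Then $$\frac1T\sum_{t=0}^{T-1}[F(w^{(t)})-F_*]\le\frac{e^{\beta}L_\phi(1+\varepsilon)}{2(1-4\alpha)\alpha\beta}\cdot\frac1n\sum_{i=1}^n\|h(w^{(0)};i)-h_i^*\|^2\cdot\varepsilon+\frac{e^{\beta}L_\phi(4\varepsilon+3)}{2\alpha(1-4\alpha)}\Big[D^2H^2+c\big(2+(V+\varepsilon^2+2)GD^2\big)^2+2+V\Big]\cdot\varepsilon.$$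
   Context: Let $n,c,d$ be positive integers and $[n]=\{1,\dots,n\}$. For each $i\in[n]$ let $h(\cdot;i):\mathbb{R}^d\to\mathbb{R}^c$ (components $h_j(\cdot;i)$, $j\in[c]$) and $\phi_i:\mathbb{R}^c\to\mathbb{R}$. Put $f(w;i)=\phi_i(h(w;i))$, $F(w)=\frac1n\sum_{i=1}^n f(w;i)$ and $F_*=\inf_{w\in\mathbb{R}^d}F(w)$. Each $\phi_i$ is assumed to attain its minimum, and $h_i^*\in\arg\min_{z}\phi_i(z)$. Vector norms are Euclidean; matrix norms are operator (spectral) norms. Assumption A: each $\phi_i$ is convex, bounded below, and $L_\phi$-smooth, i.e. $\|\nabla\phi_i(z_1)-\nabla\phi_i(z_2)\|\le L_\phi\|z_1-z_2\|$ for all $z_1,z_2$. Assumption B: each $h(\cdot;i)$ is twice continuously differentiable and there is $G>0$ with $\|\nabla_w^2 h_j(w;i)\|\le G$ for all $w\in\mathbb{R}^d$, $i\in[n]$, $j\in[c]$. Iteration setup: given a tolerance $\varepsilon>0$, step sizes $\eta^{(t)}>0$, learning rates $\alpha_i^{(t)}>0$ and iterates $w^{(t)}$, let $H_i^{(t)}\in\mathbb{R}^{c\times d}$ be the Jacobian of $h(\cdot;i)$ at $w^{(t)}$, let $\Phi^{(t)}(v)=\frac{1}{2n}\sum_{i=1}^n\|\eta^{(t)}H_i^{(t)}v-\alpha_i^{(t)}\nabla\phi_i(h(w^{(t)};i))\|^2$, $\Psi^{(t)}(v)=\Phi^{(t)}(v)+\frac{\varepsilon^2}{2}\|v\|^2$,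 and let $v_{*\mathrm{reg}}^{(t)}$ be the unique minimizer of $\Psi^{(t)}$ over $\mathbb{R}^d$. Algorithm 2: choose $w^{(0)}\in\mathbb{R}^d$; for $t=0,\dots,T-1$ let $v^{(t)}$ be any vector with $\|v^{(t)}-v_{*\mathrm{reg}}^{(t)}\|\le\varepsilon$ and set $w^{(t+1)}=w^{(t)}-\eta^{(t)}v^{(t)}$. Assumption C (constant $V>0$): for each $0\le t<T$ there exists $\hat v^{(t)}\in\mathbb{R}^d$ with $\|\hat v^{(t)}\|^2\le V$ and $\Phi^{(t)}(\hat v^{(t)})\le\varepsilon^2$. Assumption D (constant $H>0$): $\|H_i^{(t)}\|\le H/\sqrt{\varepsilon}$ for all $i\in[n]$ and $0\le t<T$. *)

(* Defs.v *)
From HB Require Import structures.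
From mathcomp Require Import all_boot all_order all_algebra.
From mathcomp Require Import all_classical all_reals all_analysis.
Set Implicit Arguments. Unset Strict Implicit. Unset Printing Implicit Defensive.
Import Order.TTheory GRing.Theory Num.Theory.
Import numFieldNormedType.Exports.
Local Open Scope ring_scope.
Local Open Scope classical_set_scope.

Section Defs.
Variable R : realType.

Definition sqnorm m (v : 'cV[R]_m) : R := \sum_(i < m) (v i 0) ^+ 2.
Definition enorm m (v : 'cV[R]_m) : R := Num.sqrt (sqnorm v).

Definition opnorm m k (A : 'M[R]_(m, k)) : R :=
  sup [set enorm (A *m v) | v in [set v : 'cV[R]_k | enorm v <= 1]].

Definition basis_vec d (k : 'I_d) : 'cV[R]_d := delta_mx k 0.

Definition partial_deriv d (f : 'cV[R]_d -> R) (k : 'I_d) (x : 'cV[R]_d) : R :=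
  'D_(basis_vec k) f x.

Definition grad_vec d (f : 'cV[R]_d -> R) (x : 'cV[R]_d) : 'cV[R]_d :=
  \col_k partial_deriv f k x.
Definition hessian_mx d (f : 'cV[R]_d -> R) (x : 'cV[R]_d) : 'M[R]_d :=
  \matrix_(k, l) partial_deriv (partial_deriv f k) l x.
Definition jacobian_mx c d (h : 'cV[R]_d -> 'cV[R]_c) (x : 'cV[R]_d) : 'M[R]_(c, d) :=
  \matrix_(j, k) partial_deriv (fun y => h y j 0) k x.

Definition convex_fn m (f : 'cV[R]_m -> R) : Prop :=
  forall (x y : 'cV[R]_m) (s : R), 0 <= s -> s <= 1 ->
    f (s *: x + (1 - s) *: y) <= s * f x + (1 - s) * f y.

Definition bounded_below m (f : 'cV[R]_m -> R) : Prop :=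
  exists lb : R, forall x, lb <= f x.

Definition L_smooth m (L : R) (f : 'cV[R]_m -> R) : Prop :=
  (forall z, differentiable f z) /\
  (forall z1 z2, enorm (grad_vec f z1 - grad_vec f z2) <= L * enorm (z1 - z2)).

Definition twice_cont_diff d (f : 'cV[R]_d -> R) : Prop :=
  (forall x, differentiable f x) /\
  (forall k x, differentiable (partial_deriv f k) x) /\
  (forall k l, continuous (partial_deriv (partial_deriv f k) l)).

Definition Fobj n c d (h : 'I_n -> 'cV[R]_d -> 'cV[R]_c) (phi : 'I_n -> 'cV[R]_c -> R)
  (w : 'cV[R]_d) : R :=
  (n%:R)^-1 * \sum_(i < n) phi i (h i w).

Definition PhiT n c d (h : 'I_n -> 'cV[R]_d -> 'cV[R]_c) (phi : 'I_n -> 'cV[R]_c -> R)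
  (eta : R) (alpha : 'I_n -> R) (wt : 'cV[R]_d) (v : 'cV[R]_d) : R :=
  (2 * n%:R)^-1 * \sum_(i < n)
     sqnorm (eta *: (jacobian_mx (h i) wt *m v) - alpha i *: grad_vec (phi i) (h i wt)).

Definition PsiT n c d (h : 'I_n -> 'cV[R]_d -> 'cV[R]_c) (phi : 'I_n -> 'cV[R]_c -> R)
  (eps eta : R) (alpha : 'I_n -> R) (wt : 'cV[R]_d) (v : 'cV[R]_d) : R :=
  PhiT h phi eta alpha wt v + eps ^+ 2 / 2 * sqnorm v.

End Defs.

(* Main.v *)
Require Import Defs.
From HB Require Import structures.
From mathcomp Require Import all_boot all_order all_algebra.
From mathcomp Require Import all_classical all_reals all_analysis.
Import Order.TTheory GRing.Theory Num.Theory.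
Import numFieldNormedType.Exports.
Local Open Scope ring_scope.
Local Open Scope classical_set_scope.
From mathcomp Require Import ring lra.
Set Implicit Arguments. Unset Strict Implicit.
Section S.
Variable R : realType.

Lemma incr_le (k dk : R -> R) (a b M : R) : a < b ->
  (forall s : R, is_derive s (1:R) k (dk s)) ->
  (forall s, a < s -> s < b -> dk s <= M) -> k b - k a <= M * (b - a).
Proof.
move=> ab dk_ dkM.
have [x xab ->] : exists2 x, x \in `]a, b[%R & k b - k a = dk x * (b - a).
  apply: MVT => //.
  apply: continuous_subspaceT => x.
  apply: differentiable_continuous.
  by apply/derivable1_diffP; exact: ex_derive.
rewrite ler_wpM2r //; first by rewrite subr_ge0 ltW.
by move: xab; rewrite in_itv /= => /andP[]; exact: dkM.
Qed.
Lemma poly2_der (a b : R) (s : R) : is_derive s (1:R) (fun x : R => a * x + b * x ^+ 2) (a + b * (2 * s)).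
Proof.
have -> : (fun x : R => a * x + b * x ^+ 2) = (a \*: (@id R)) + b \*: ((@id R) ^+ 2).
  by apply/funext => x /=.
apply: is_derive_eq.
by rewrite /GRing.scale /= !mulr1 expr1 mulrC. Qed.

Lemma lin_bound (k dk : R -> R) (M : R) :
  (forall s : R, is_derive s (1:R) k (dk s)) ->
  (forall s, 0 < s -> s < 1 -> dk s <= dk 0 + M * s) ->
  k 1 <= k 0 + dk 0 + M / 2.
Proof.
move=> dk_ H.
pose q := (fun x : R => - dk 0 * x + (- (M / 2)) * x ^+ 2).
have Hd : forall s : R, is_derive s (1:R) (k + q) (dk s + (- dk 0 + (- (M/2)) * (2 * s))).
  by move=> s; apply: is_deriveD => //; exact: poly2_der.
have := @incr_le (k + q) _ 0 1 0 ltr01 Hd.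
have -> : (k + q) 1 - (k + q) 0 = k 1 - k 0 - dk 0 - M / 2.
  change (k 1 + q 1 - (k 0 + q 0) = k 1 - k 0 - dk 0 - M / 2); rewrite /q expr1n expr0n /=; ring.
move=> /(_ _)/wrap[]; last first.
  rewrite mul0r; move=> H2; lra.
move=> s s0 s1; have := H s s0 s1.
have -> : - (M / 2) * (2 * s) = - (M * s) by field.
lra.
Qed.

Definition dot m (u v : 'cV[R]_m) : R := \sum_(i < m) u i 0 * v i 0.
Arguments dot {m}.

Lemma sqnorm_ge0 m (u : 'cV[R]_m) : 0 <= sqnorm u.
Proof. by apply: sumr_ge0 => i _; exact: sqr_ge0. Qed.

Lemma enorm_ge0 m (u : 'cV[R]_m) : 0 <= enorm u.
Proof. exact: sqrtr_ge0. Qed.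

Lemma enorm2 m (u : 'cV[R]_m) : enorm u ^+ 2 = sqnorm u.
Proof. by rewrite /enorm sqr_sqrtr // sqnorm_ge0. Qed.

Lemma sqnorm0P m (u : 'cV[R]_m) : sqnorm u = 0 -> forall i, u i 0 = 0.
Proof.
move=> H i; have /psumr_eq0P H2 : \sum_(i < m) (u i 0) ^+ 2 = 0 by [].
have := H2 (fun i _ => sqr_ge0 (u i 0)) i isT.
by move/eqP; rewrite sqrf_eq0 => /eqP.
Qed.

Lemma dot_expand m (u v : 'cV[R]_m) (p q : R) :
  \sum_(i < m) (q * u i 0 - p * v i 0) ^+ 2 =
  q ^+ 2 * sqnorm u - 2 * p * q * dot u v + p ^+ 2 * sqnorm v.
Proof.
rewrite /sqnorm /dot !mulr_sumr -sumrB -big_split /=.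
by apply: eq_bigr => i _; ring.
Qed.

Lemma CS m (u v : 'cV[R]_m) : dot u v <= enorm u * enorm v.
Proof.
have [p0|pn0] := eqVneq (enorm u) 0.
  have : sqnorm u = 0 by rewrite -enorm2 p0 expr0n.
  move/sqnorm0P => H; rewrite p0 mul0r /dot big1 // => i _.
  by rewrite H mul0r.
have [q0|qn0] := eqVneq (enorm v) 0.
  have : sqnorm v = 0 by rewrite -enorm2 q0 expr0n.
  move/sqnorm0P => H; rewrite q0 mulr0 /dot big1 // => i _.
  by rewrite H mulr0.
set p := enorm u; set q := enorm v.
have pp : 0 < p by rewrite lt_def pn0 enorm_ge0.
have qp : 0 < q by rewrite lt_def qn0 enorm_ge0.
have H := dot_expand u v p q.
have H0 : 0 <= \sum_(i < m) (q * u i 0 - p * v i 0) ^+ 2.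
  by apply: sumr_ge0 => i _; exact: sqr_ge0.
rewrite H -!enorm2 -/p -/q in H0.
have pq : 0 < p * q by exact: mulr_gt0.
rewrite -(ler_pM2l pq); nra.
Qed.

Lemma sqnormZ m (a : R) (u : 'cV[R]_m) : sqnorm (a *: u) = a ^+ 2 * sqnorm u.
Proof.
by rewrite /sqnorm mulr_sumr; apply: eq_bigr => i _; rewrite mxE exprMn.
Qed.

Lemma enormZ m (a : R) (u : 'cV[R]_m) : enorm (a *: u) = `|a| * enorm u.
Proof. by rewrite /enorm sqnormZ sqrtrM ?sqr_ge0 // sqrtr_sqr. Qed.

Lemma enormN m (u : 'cV[R]_m) : enorm (- u) = enorm u.
Proof. by rewrite -scaleN1r enormZ normrN normr1 mul1r. Qed.

Lemma dotN m (u v : 'cV[R]_m) : dot (- u) v = - dot u v.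
Proof. by rewrite /dot -sumrN; apply: eq_bigr => i _; rewrite mxE mulNr. Qed.

Lemma CSabs m (u v : 'cV[R]_m) : `|dot u v| <= enorm u * enorm v.
Proof.
rewrite ler_norml CS andbT -(enormN u) -lerNl -dotN; exact: CS.
Qed.

Lemma sqnorm_le_enorm m (u : 'cV[R]_m) (e : R) : enorm u <= e -> sqnorm u <= e ^+ 2.
Proof.
move=> H; rewrite -enorm2; have e0 := enorm_ge0 u; nra.
Qed.

Lemma col_decomp m (u : 'cV[R]_m) : u = \sum_(k < m) u k 0 *: basis_vec R k.
Proof.
rewrite {1}(matrix_sum_delta u); apply: eq_bigr => k _.
by rewrite big_ord1 /basis_vec.
Qed.

Lemma D_grad m (f : 'cV[R]_m -> R) (y u : 'cV[R]_m) :
  differentiable f y -> 'D_u f y = \sum_(k < m) u k 0 * partial_deriv f k y.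
Proof.
move=> df; rewrite deriveE // {1}(col_decomp u) linear_sum.
apply: eq_bigr => k _; rewrite linearZ /partial_deriv deriveE //.
Qed.

Lemma line_der m (f : 'cV[R]_m -> R) (w u : 'cV[R]_m) (s : R) :
  differentiable f (w + s *: u) ->
  is_derive s (1:R) (fun r : R => f (w + r *: u)) ('D_u f (w + s *: u)).
Proof.
move=> df.
have E : (fun h : R => h^-1 *: (((fun r : R => f (w + r *: u)) \o shift s) (h *: 1) - f (w + s *: u)))
  = (fun h : R => h^-1 *: ((f \o shift (w + s *: u)) (h *: u) - f (w + s *: u))).
  apply/funext => h /=; congr (_ *: (f _ - _)).
  by rewrite /shift /= scalerDl [_ *: 1]mulr1 addrCA addrC.
apply: DeriveDef.
  by rewrite /derivable E; exact: diff_derivable.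
by rewrite /derive E.
Qed.

Lemma coord_le m (v : 'cV[R]_m) j : `|v j 0| <= enorm v.
Proof.
rewrite /enorm -sqrtr_sqr ler_sqrt ?sqnorm_ge0 // /sqnorm (bigD1 j) //=.
by rewrite lerDl sumr_ge0 // => i _; exact: sqr_ge0.
Qed.

Lemma mulmx_coord_le m k (A : 'M[R]_(m, k)) (v : 'cV[R]_k) i :
  `|(A *m v) i 0| <= (\sum_(j < k) `|A i j|) * enorm v.
Proof.
rewrite mxE mulr_suml; apply: le_trans (ler_norm_sum _ _ _) _.
apply: ler_sum => j _; rewrite normrM ler_wpM2l //; exact: coord_le.
Qed.

Lemma opnorm_bound m k (A : 'M[R]_(m, k)) (v : 'cV[R]_k) :
  enorm (A *m v) <= opnorm A * enorm v.
Proof.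
set S := \sum_(i < m) \sum_(j < k) `|A i j|.
have Hsup : has_sup [set enorm (A *m v) | v in [set v : 'cV[R]_k | enorm v <= 1]].
  split; first by exists (enorm (A *m 0)); exists 0 => //=;
    rewrite /enorm /sqnorm big1 ?sqrtr0 // => i _; rewrite mxE expr0n.
  exists (Num.sqrt (m%:R * S ^+ 2)) => _ [x /= x1 <-].
  rewrite /enorm ler_sqrt; last by rewrite mulr_ge0 ?sqr_ge0.
  have -> : m%:R * S ^+ 2 = \sum_(i < m) S ^+ 2 by rewrite sumr_const card_ord mulr_natl.
  rewrite /sqnorm.
  apply: ler_sum => i _; rewrite -real_normK ?num_real //.
  have S0 : 0 <= S by apply: sumr_ge0 => *; apply: sumr_ge0.
  have Hc := mulmx_coord_le A x i.
  have Hn := normr_ge0 ((A *m x) i 0).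
  have Si : \sum_(j < k) `|A i j| <= S.
    by rewrite /S (bigD1 i) //= lerDl; apply: sumr_ge0 => *; apply: sumr_ge0.
  have b0 : 0 <= \sum_(j < k) `|A i j| by apply: sumr_ge0.
  have aS : `|(A *m x) i 0| <= S.
    apply: (le_trans Hc); apply: le_trans Si; rewrite ler_piMr //.
  nra.
have [e0|en0] := eqVneq (enorm v) 0.
  have : sqnorm v = 0 by rewrite -enorm2 e0 expr0n.
  move/sqnorm0P => H.
  have -> : v = 0 by apply/matrixP => i j; rewrite (ord1 j) H mxE.
  have E0 : enorm (0 : 'cV[R]_m) = 0.
    by rewrite /enorm /sqnorm big1 ?sqrtr0 // => i _; rewrite mxE expr0n.
  have E0' : enorm (0 : 'cV[R]_k) = 0.
    by rewrite /enorm /sqnorm big1 ?sqrtr0 // => i _; rewrite mxE expr0n.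
  by rewrite mulmx0 E0 E0' mulr0.
have ep : 0 < enorm v by rewrite lt_def en0 enorm_ge0.
have : enorm (A *m ((enorm v)^-1 *: v)) <= opnorm A.
  apply: sup_upper_bound => //; exists ((enorm v)^-1 *: v) => //=.
  by rewrite enormZ ger0_norm ?invr_ge0 ?enorm_ge0 // mulVf.
rewrite -scalemxAr enormZ ger0_norm ?invr_ge0 ?enorm_ge0 //.
by rewrite -ler_pdivrMr // mulrC.
Qed.

Lemma dotBr m (u a b : 'cV[R]_m) : dot u (a - b) = dot u a - dot u b.
Proof. by rewrite /dot -sumrB; apply: eq_bigr => i _; rewrite !mxE mulrBr. Qed.

Lemma dot_grad m (f : 'cV[R]_m -> R) (y u : 'cV[R]_m) :
  differentiable f y -> 'D_u f y = dot u (grad_vec f y).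
Proof. by move=> df; rewrite D_grad // /dot; apply: eq_bigr => k _; rewrite mxE. Qed.

Lemma small_le (a b C : R) : 0 <= C ->
  (forall s, 0 < s -> s <= 1 -> a <= b + s * C) -> a <= b.
Proof.
move=> C0 H; apply/ler_addgt0Pr => e e0.
pose s := Num.min 1 (e / (C + 1)).
have s0 : 0 < s by rewrite lt_min ltr01 divr_gt0 // ltr_wpDl.
have s1 : s <= 1 by rewrite ge_min lexx.
apply: (le_trans (H s s0 s1)); rewrite lerD2l.
have : s <= e / (C + 1) by rewrite ge_min lexx orbT.
rewrite ler_pdivlMr ?ltr_wpDl // => H2; nra.
Qed.

Lemma dotZl m (a : R) (u v : 'cV[R]_m) : dot (a *: u) v = a * dot u v.
Proof. by rewrite /dot mulr_sumr; apply: eq_bigr => i _; rewrite mxE mulrA. Qed.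

Lemma dotii m (u : 'cV[R]_m) : dot u u = sqnorm u.
Proof. by rewrite /dot /sqnorm; apply: eq_bigr => i _; rewrite expr2. Qed.

Section Smooth.
Variables (m : nat) (L : R) (f : 'cV[R]_m -> R).
Hypothesis Hs : L_smooth L f.
Hypothesis L0 : 0 <= L.

Lemma dg_der (x u : 'cV[R]_m) (s : R) :
  is_derive s (1:R) (fun r : R => f (x + r *: u)) (dot u (grad_vec f (x + s *: u))).
Proof.
have df := Hs.1 (x + s *: u).
by rewrite -dot_grad //; exact: line_der.
Qed.

Lemma dg_lip (x u : 'cV[R]_m) (s : R) : 0 <= s ->
  `|dot u (grad_vec f (x + s *: u)) - dot u (grad_vec f (x + 0 *: u))| <= L * s * sqnorm u.
Proof.
move=> s0; rewrite -dotBr; apply: le_trans (CSabs _ _) _.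
have := Hs.2 (x + s *: u) (x + 0 *: u).
have -> : x + s *: u - (x + 0 *: u) = s *: u by rewrite scale0r addr0 addrC addKr.
rewrite enormZ ger0_norm // => H.
rewrite -enorm2; have := enorm_ge0 u; nra.
Qed.

Lemma descent (x u : 'cV[R]_m) :
  f (x + u) <= f x + dot u (grad_vec f x) + L / 2 * sqnorm u.
Proof.
have := @lin_bound (fun r : R => f (x + r *: u)) (fun s => dot u (grad_vec f (x + s *: u)))
  (L * sqnorm u) (dg_der x u).
rewrite scale1r scale0r addr0 => H.
rewrite mulrAC; apply: H => s s0 s1.
have := dg_lip x u (ltW s0); rewrite scale0r addr0 => /ler_normlP[_ H1].
by rewrite -lerBlDl -mulrA [sqnorm u * s]mulrC mulrA.
Qed.

Lemma convex_first (x u : 'cV[R]_m) : convex_fn f ->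
  dot u (grad_vec f x) <= f (x + u) - f x.
Proof.
move=> cvx.
have C0 : 0 <= L * sqnorm u by rewrite mulr_ge0 // sqnorm_ge0.
apply: (small_le C0) => s s0 s1.
have Hd : forall t : R, is_derive t (1:R) (- (fun r : R => f (x + r *: u)))
   (- dot u (grad_vec f (x + t *: u))).
  by move=> t; apply: is_deriveN; exact: dg_der.
have := @incr_le _ _ 0 s (- dot u (grad_vec f x) + s * (L * sqnorm u)) s0 Hd.
move=> /(_ _)/wrap[].
  move=> t t0 ts; have := dg_lip x u (ltW t0); rewrite scale0r addr0 => /ler_normlP[H _].
  have : L * t * sqnorm u <= s * (L * sqnorm u).
    by rewrite mulrAC mulrC ler_wpM2r // ltW.
  lra.
change (- f (x + s *: u) - - f (x + 0 *: u) <= (- dot u (grad_vec f x) + s * (L * sqnorm u)) * (s - 0) ->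
  dot u (grad_vec f x) <= f (x + u) - f x + s * (L * sqnorm u)).
rewrite scale0r addr0 subr0 => H.
have Hc := cvx (x + u) x s (ltW s0) s1.
rewrite (_ : s *: (x + u) + (1 - s) *: x = x + s *: u) in Hc; last first.
  by rewrite scalerDr scalerBl scale1r addrC addrA subrK.
have : s * dot u (grad_vec f x) <= s * (f (x + u) - f x + s * (L * sqnorm u)) by nra.
by rewrite ler_pM2l.
Qed.

Lemma grad_bound (x z : 'cV[R]_m) : 0 < L -> (forall y, f z <= f y) ->
  sqnorm (grad_vec f x) <= 2 * L * (f x - f z).
Proof.
move=> Lp Hz.
have H := descent x (- (L^-1) *: grad_vec f x).
rewrite dotZl dotii sqnormZ sqrrN in H.
have := Hz (x + - L^-1 *: grad_vec f x).
set g := sqnorm _ in H *; set A := f (x + _) in H *.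
have gp : 0 <= g by exact: sqnorm_ge0.
have E : L / 2 * (L^-1 ^+ 2 * g) = L^-1 / 2 * g by field; rewrite gt_eqF.
rewrite E in H => H2.
have E2 : 2 * L * (f x - f z) - g = 2 * L * ((f x - f z) - L^-1 / 2 * g).
  by field; rewrite gt_eqF.
rewrite -subr_ge0 E2; apply: mulr_ge0; first by rewrite mulr_ge0 // ltW.
rewrite subr_ge0; lra.
Qed.
End Smooth.

Lemma young (a b e : R) : 0 < e -> (a + b) ^+ 2 <= (1 + e) * a ^+ 2 + (1 + e^-1) * b ^+ 2.
Proof.
move=> e0; rewrite -subr_ge0.
have -> : (1 + e) * a ^+ 2 + (1 + e^-1) * b ^+ 2 - (a + b) ^+ 2 = e^-1 * (e * a - b) ^+ 2.
  by field; rewrite gt_eqF.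
by rewrite mulr_ge0 ?invr_ge0 ?sqr_ge0 // ltW.
Qed.

Lemma sqnorm_young m (p q : 'cV[R]_m) (e : R) : 0 < e ->
  sqnorm (p + q) <= (1 + e) * sqnorm p + (1 + e^-1) * sqnorm q.
Proof.
move=> e0; rewrite /sqnorm !mulr_sumr -big_split /=; apply: ler_sum => i _.
rewrite mxE; exact: young.
Qed.

Lemma sqnormBZ m (p q : 'cV[R]_m) (a : R) :
  sqnorm (p - a *: q) = sqnorm p - 2 * a * dot p q + a ^+ 2 * sqnorm q.
Proof.
rewrite /sqnorm /dot !mulr_sumr -sumrB -big_split /=; apply: eq_bigr => i _.
rewrite !mxE; ring.
Qed.

Lemma gd_step m (L : R) (f : 'cV[R]_m -> R) (x y z : 'cV[R]_m) (a al e : R) :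
  L_smooth L f -> convex_fn f -> 0 < L -> (forall y, f z <= f y) ->
  0 < a -> a * L <= al -> 0 < e ->
  sqnorm (y - z) <= (1 + e) * (sqnorm (x - z) - 2 * a * (1 - al) * (f x - f z))
     + (1 + e^-1) * sqnorm (y - (x - a *: grad_vec f x)).
Proof.
move=> Hs cvx Lp Hz ap aL e0.
have -> : y - z = (x - z - a *: grad_vec f x) + (y - (x - a *: grad_vec f x)).
  by apply/matrixP => i j; rewrite !mxE; ring.
apply: (le_trans (sqnorm_young _ _ e0)); apply: lerD => //; apply: ler_wpM2l; first by rewrite addr_ge0 // ltW.
rewrite sqnormBZ.
have c1 := convex_first Hs (ltW Lp) x (z - x) cvx.
rewrite (_ : x + (z - x) = z) in c1; last by rewrite addrC subrK.
rewrite -opprB dotN in c1.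
have gb := grad_bound Hs (ltW Lp) x Lp Hz.
have D0 : 0 <= f x - f z by rewrite subr_ge0.
have g0 := sqnorm_ge0 (grad_vec f x).
move: c1 gb D0 g0; set D := f x - f z; set g := sqnorm _; set dd := dot _ _.
move=> c1 gb D0 g0.
have : a ^+ 2 * g <= 2 * a * al * D.
  apply: (le_trans (y := a ^+ 2 * (2 * L * D))); first by rewrite ler_wpM2l ?sqr_ge0.
  have : a * L * D <= al * D by rewrite ler_wpM2r.
  nra.
have : a * D <= a * dd by rewrite ler_pM2l //; rewrite /D; lra.
nra.
Qed.

Lemma taylor_up (k dk ddk : R -> R) (M : R) :
  (forall s : R, is_derive s (1:R) k (dk s)) ->
  (forall s : R, is_derive s (1:R) dk (ddk s)) ->
  (forall s, 0 < s -> s < 1 -> ddk s <= M) ->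
  k 1 <= k 0 + dk 0 + M / 2.
Proof.
move=> Hk Hdk HM; apply: lin_bound => // s s0 s1.
have := @incr_le dk ddk 0 s M s0 Hdk.
move=> /(_ _)/wrap[]; first by move=> t t0 ts; apply: HM => //; exact: lt_trans ts s1.
rewrite subr0; lra.
Qed.

Lemma taylor_abs (k dk ddk : R -> R) (M : R) :
  (forall s : R, is_derive s (1:R) k (dk s)) ->
  (forall s : R, is_derive s (1:R) dk (ddk s)) ->
  (forall s, 0 < s -> s < 1 -> `|ddk s| <= M) ->
  `|k 1 - k 0 - dk 0| <= M / 2.
Proof.
move=> Hk Hdk HM.
have HM1 : forall s, 0 < s -> s < 1 -> - ddk s <= M.
  by move=> s s0 s1; have := HM s s0 s1; rewrite ler_norml => /andP[]; lra.
have HM2 : forall s, 0 < s -> s < 1 -> ddk s <= M.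
  by move=> s s0 s1; have := HM s s0 s1; rewrite ler_norml => /andP[]; lra.
have H1 := @taylor_up (fun s => - k s) (fun s => - dk s) (fun s => - ddk s) M
  (fun s => is_deriveN (Hk s)) (fun s => is_deriveN (Hdk s)) HM1.
have H2 := @taylor_up k dk ddk M Hk Hdk HM2.
rewrite /= in H1.
apply/ler_normlP; split; lra.
Qed.

Lemma taylor_mv m (F : 'cV[R]_m -> R) (G : R) (w u : 'cV[R]_m) :
  twice_cont_diff F -> (forall x, opnorm (hessian_mx F x) <= G) ->
  `|F (w + u) - F w - dot u (grad_vec F w)| <= G / 2 * sqnorm u.
Proof.
move=> [dF [dP _]] HG.
pose k := fun s : R => F (w + s *: u).
pose dk := fun s : R => \sum_(l < m) u l 0 * partial_deriv F l (w + s *: u).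
pose ddk := fun s : R => \sum_(l < m) u l 0 * dot u (grad_vec (partial_deriv F l) (w + s *: u)).
have Hk : forall s : R, is_derive s (1:R) k (dk s).
  move=> s; apply: is_derive_eq; first exact: line_der.
  by rewrite D_grad.
have Hdk : forall s : R, is_derive s (1:R) dk (ddk s).
  move=> s.
  have -> : dk = \sum_(l < m) (fun s : R => u l 0 * partial_deriv F l (w + s *: u)).
    by rewrite fct_sumE; apply/funext => r.
  rewrite /ddk; apply: is_derive_sum => l.
  have -> : (fun s : R => u l 0 * partial_deriv F l (w + s *: u)) =
     u l 0 \*: (fun s : R => partial_deriv F l (w + s *: u)) by apply/funext.
  apply: is_derive_eq; first apply: is_deriveZ; first exact: line_der.
  by rewrite dot_grad.
have := @taylor_abs k dk ddk (G * sqnorm u) Hk Hdk.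
move=> /(_ _)/wrap[].
  move=> s _ _; rewrite /ddk.
  set y := w + s *: u.
  have -> : \sum_(l < m) u l 0 * dot u (grad_vec (partial_deriv F l) y) =
            dot u (hessian_mx F y *m u).
    rewrite /dot; apply: eq_bigr => l _; rewrite mxE; congr (_ * _).
    by apply: eq_bigr => j _; rewrite !mxE mulrC.
  apply: (le_trans (CSabs _ _)).
  have := opnorm_bound (hessian_mx F y) u.
  have := HG y; have := enorm_ge0 u; have := enorm_ge0 (hessian_mx F y *m u).
  rewrite -enorm2; move: (opnorm _) => o; move: (enorm (_ *m _)) => b; move: (enorm u) => e.
  nra.
rewrite /k /dk scale1r scale0r addr0 mulrAC.
have -> : \sum_(l < m) u l 0 * partial_deriv F l w = dot u (grad_vec F w).
  by rewrite /dot; apply: eq_bigr => l _; rewrite mxE.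
by [].
Qed.
End S.
Section T.
Variable R : realType.

Lemma telescope (E Dl : nat -> R) (c1 C : R) (T : nat) :
  (forall t, (t < T)%N -> E t.+1 <= E t - c1 * Dl t + C) ->
  c1 * \sum_(t < T) Dl t <= E 0%N - E T + T%:R * C.
Proof.
elim: T => [|T IH] H; first by rewrite big_ord0 mulr0 subrr mul0r addr0.
rewrite big_ord_recr /= mulrDr.
have H1 := IH (fun t tT => H t (ltnW tT)).
have H2 := H T (ltnSn T).
rewrite -natr1 mulrDl mul1r; lra.
Qed.

Lemma pow_le_exp (e : R) (t : nat) : 0 <= e -> (1 + e) ^+ t <= expR (t%:R * e).
Proof.
move=> e0; rewrite expRM_natl; apply: lerXn2r.
- by rewrite nnegrE addr_ge0.
- by rewrite nnegrE expR_ge0.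
- exact: expR_ge1Dx.
Qed.

Lemma sq3 (p q r : R) : (p - q - r) ^+ 2 <= 3 * (p ^+ 2 + q ^+ 2 + r ^+ 2).
Proof.
rewrite -subr_ge0.
have -> : 3 * (p ^+ 2 + q ^+ 2 + r ^+ 2) - (p - q - r) ^+ 2 =
  (p + q) ^+ 2 + (p + r) ^+ 2 + (q - r) ^+ 2 by ring.
by rewrite !addr_ge0 ?sqr_ge0.
Qed.

Lemma sqnorm3 m (p q r : 'cV[R]_m) :
  sqnorm (p - q - r) <= 3 * (sqnorm p + sqnorm q + sqnorm r).
Proof.
rewrite /sqnorm -!big_split /= mulr_sumr; apply: ler_sum => i _.
rewrite !mxE; exact: sq3.
Qed.

Lemma sqnormB_le m (p q : 'cV[R]_m) : sqnorm (p + q) <= 2 * sqnorm p + 2 * sqnorm q.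
Proof.
have := sqnorm_young p q ltr01; rewrite invr1.
by have -> : (1 + 1 : R) = 2 by [].
Qed.

Lemma sqnorm_coord_le m (p : 'cV[R]_m) (b : R) :
  (forall j, `|p j 0| <= b) -> sqnorm p <= m%:R * b ^+ 2.
Proof.
move=> H; rewrite /sqnorm.
have -> : m%:R * b ^+ 2 = \sum_(i < m) b ^+ 2 by rewrite sumr_const card_ord mulr_natl.
apply: ler_sum => j _; have := H j; have := normr_ge0 (p j 0).
rewrite -[p j 0 ^+ 2]real_normK ?num_real //; nra.
Qed.

Lemma jac_dot c d (h : 'cV[R]_d -> 'cV[R]_c) (x u : 'cV[R]_d) j :
  (jacobian_mx h x *m u) j 0 = dot u (grad_vec (fun y => h y j 0) x).
Proof. by rewrite mxE /dot; apply: eq_bigr => l _; rewrite !mxE mulrC. Qed.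

End T.
Section M.
Variable R : realType.

Lemma sqnormN m (u : 'cV[R]_m) : sqnorm (- u) = sqnorm u.
Proof. by rewrite -scaleN1r sqnormZ sqrrN expr1n mul1r. Qed.

Lemma key_step (n c d : nat) (h : 'I_n -> 'cV[R]_d -> 'cV[R]_c) (phi : 'I_n -> 'cV[R]_c -> R)
  (hstar : 'I_n -> 'cV[R]_c) (Lphi G V Hc eps Dc a al : R)
  (wt wt1 vt vregt : 'cV[R]_d) :
  (0 < n)%N -> 0 < Lphi -> 0 < G -> 0 < V -> 0 < Hc -> 0 < eps -> 0 < Dc ->
  0 < a -> a * Lphi <= al ->
  (forall i z, phi i (hstar i) <= phi i z) ->
  (forall i, convex_fn (phi i) /\ bounded_below (phi i) /\ L_smooth Lphi (phi i)) ->
  (forall i (j : 'I_c), twice_cont_diff (fun x => h i x j 0)) ->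
  (forall i (j : 'I_c) x, opnorm (hessian_mx (fun y => h i y j 0) x) <= G) ->
  (forall u, PsiT h phi eps (Dc * Num.sqrt eps) (fun _ => a) wt vregt
          <= PsiT h phi eps (Dc * Num.sqrt eps) (fun _ => a) wt u) ->
  enorm (vt - vregt) <= eps ->
  wt1 = wt - (Dc * Num.sqrt eps) *: vt ->
  (exists vh : 'cV[R]_d, sqnorm vh <= V /\
     PhiT h phi (Dc * Num.sqrt eps) (fun _ => a) wt vh <= eps ^+ 2) ->
  (forall i, opnorm (jacobian_mx (h i) wt) <= Hc / Num.sqrt eps) ->
  \sum_(i < n) sqnorm (h i wt1 - hstar i) <=
    (1 + eps) * (\sum_(i < n) sqnorm (h i wt - hstar i)
                 - 2 * a * (1 - al) * \sum_(i < n) (phi i (h i wt) - phi i (hstar i)))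
    + (1 + eps^-1) * (3 * (n%:R * eps ^+ 2 *
        (Dc ^+ 2 * Hc ^+ 2 + c%:R * (2 + (V + eps ^+ 2 + 2) * G * Dc ^+ 2) ^+ 2 + 2 + V))).
Proof.
move=> n0 L0 G0 V0 H0 e0 D0 ap aL Hmin HA HB HG Hreg Hv Hw [vh [vhV vhPhi]] HD.
set eta := Dc * Num.sqrt eps.
set W := V + eps ^+ 2 + 2.
have se0 : 0 < Num.sqrt eps by rewrite sqrtr_gt0.
have eta0 : 0 < eta by rewrite mulr_gt0.
have eta2 : eta ^+ 2 = Dc ^+ 2 * eps by rewrite exprMn sqr_sqrtr // ltW.
set r := fun i => eta *: (jacobian_mx (h i) wt *m vregt) - a *: grad_vec (phi i) (h i wt).
have nR : 0 < n%:R :> R by rewrite ltr0n.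
have Phi0 : forall u, 0 <= PhiT h phi eta (fun _ => a) wt u.
  move=> u; rewrite /PhiT; apply: mulr_ge0; first by rewrite invr_ge0 mulr_ge0 ?ler0n.
  by apply: sumr_ge0 => *; apply: sqnorm_ge0.
have HPsi := Hreg vh; rewrite /PsiT in HPsi.
have Hsv := sqnorm_ge0 vh.
have Hsreg := sqnorm_ge0 vregt.
have P0 := Phi0 vregt.
have e2 : 0 < eps ^+ 2 by rewrite exprn_gt0.
have Hvreg : sqnorm vregt <= 2 + V.
  have : eps ^+ 2 / 2 * sqnorm vregt <= eps ^+ 2 / 2 * (2 + V).
    have : eps ^+ 2 / 2 * sqnorm vh <= eps ^+ 2 / 2 * V by rewrite ler_wpM2l // divr_ge0 // ltW.
    have -> : eps ^+ 2 / 2 * (2 + V) = eps ^+ 2 + eps ^+ 2 / 2 * V by field.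
    lra.
  by rewrite ler_pM2l // divr_gt0.
have Hr : \sum_(i < n) sqnorm (r i) <= n%:R * (eps ^+ 2 * (2 + V)).
  have : PhiT h phi eta (fun _ => a) wt vregt <= eps ^+ 2 / 2 * (2 + V).
    have : eps ^+ 2 / 2 * sqnorm vh <= eps ^+ 2 / 2 * V by rewrite ler_wpM2l // divr_ge0 // ltW.
    have : 0 <= eps ^+ 2 / 2 * sqnorm vregt by rewrite mulr_ge0 // divr_ge0 // ltW.
    have -> : eps ^+ 2 / 2 * (2 + V) = eps ^+ 2 + eps ^+ 2 / 2 * V by field.
    lra.
  rewrite /PhiT -/(r _) => H.
  have -> : \sum_(i < n) sqnorm (r i) = (2 * n%:R) * ((2 * n%:R)^-1 * \sum_(i < n) sqnorm (r i)).
    by rewrite mulrA mulfV ?mul1r // mulf_neq0 // gt_eqF.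
  have -> : n%:R * (eps ^+ 2 * (2 + V)) = (2 * n%:R) * (eps ^+ 2 / 2 * (2 + V)) by field.
  by rewrite ler_pM2l ?mulr_gt0.
have Hvt : sqnorm vt <= 2 * W.
  have -> : vt = vregt + (vt - vregt) by rewrite addrC subrK.
  apply: (le_trans (sqnormB_le _ _)).
  have := sqnorm_le_enorm Hv; rewrite /W; lra.
have W0 : 0 <= W by rewrite /W; have := sqr_ge0 eps; lra.
have Hdelta : forall i, sqnorm (h i wt1 - (h i wt - a *: grad_vec (phi i) (h i wt)))
   <= 3 * (c%:R * (G * Dc ^+ 2 * eps * W) ^+ 2 + sqnorm (r i) + (Dc * Hc * eps) ^+ 2).
  move=> i.
  set x := h i wt; set g := grad_vec (phi i) x; set J := jacobian_mx (h i) wt.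
  set e := h i wt1 - x + eta *: (J *m vt).
  set rd := eta *: (J *m (vt - vregt)).
  have -> : h i wt1 - (x - a *: g) = e - r i - rd.
    rewrite /e /rd /r -/x -/g -/J mulmxBr.
    by apply/matrixP => p q; rewrite !mxE; ring.
  apply: (le_trans (sqnorm3 _ _ _)); rewrite ler_wpM2l //.
  apply: lerD; first apply: lerD => //.
  - apply: sqnorm_coord_le => j.
    have := taylor_mv wt (- (eta *: vt)) (HB i j) (HG i j).
    rewrite -jac_dot -/J mulmxN -scalemxAr -Hw sqnormN sqnormZ eta2.
    rewrite /e !mxE opprK => H.
    apply: (le_trans H).
    have : G / 2 * (Dc ^+ 2 * eps * sqnorm vt) <= G / 2 * (Dc ^+ 2 * eps * (2 * W)).
      apply: ler_wpM2l; first by rewrite divr_ge0 // ltW.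
      by apply: ler_wpM2l => //; rewrite mulr_ge0 ?sqr_ge0 // ltW.
    have -> : G / 2 * (Dc ^+ 2 * eps * (2 * W)) = G * Dc ^+ 2 * eps * W by field.
    by rewrite mulrA.
  - apply: sqnorm_le_enorm.
    rewrite /rd enormZ gtr0_norm //.
    apply: (le_trans (ler_wpM2l (ltW eta0) (opnorm_bound _ _))).
    have := HD i; rewrite -/J => HJ.
    have : opnorm J * enorm (vt - vregt) <= Hc / Num.sqrt eps * eps.
      have := enorm_ge0 (vt - vregt); have : 0 <= Hc / Num.sqrt eps by rewrite divr_ge0 // ltW.
      move: (opnorm J) (enorm (vt - vregt)) HJ Hv => o xx; nra.
    move=> H; apply: (le_trans (ler_wpM2l (ltW eta0) H)).
    rewrite /eta le_eqVlt; apply/orP; left; apply/eqP; field.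
    by rewrite gt_eqF.
have Hg : forall i, sqnorm (h i wt1 - hstar i) <=
   (1 + eps) * (sqnorm (h i wt - hstar i) - 2 * a * (1 - al) * (phi i (h i wt) - phi i (hstar i)))
   + (1 + eps^-1) * sqnorm (h i wt1 - (h i wt - a *: grad_vec (phi i) (h i wt))).
  move=> i; have [cv [_ sm]] := HA i.
  exact: gd_step sm cv L0 (Hmin i) ap aL e0.
apply: (le_trans (ler_sum _ (fun i _ => Hg i))).
rewrite big_split /= -!mulr_sumr sumrB -mulr_sumr.
apply: lerD => //.
apply: ler_wpM2l; first by rewrite addr_ge0 // invr_ge0 ltW.
apply: (le_trans (ler_sum _ (fun i _ => Hdelta i))).
rewrite -mulr_sumr ler_wpM2l //.
rewrite !big_split /=.
have sc : forall x : R, \sum_(i < n) x = n%:R * x by move=> x; rewrite sumr_const card_ord mulr_natl.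
rewrite !sc.
have Z0 : 0 <= W * G * Dc ^+ 2 by rewrite mulr_ge0 ?sqr_ge0 // mulr_ge0 // ltW.
have HZ : (W * G * Dc ^+ 2) ^+ 2 <= (2 + W * G * Dc ^+ 2) ^+ 2.
  by rewrite ler_sqr ?nnegrE ?addr_ge0 // lerDr.
have E : n%:R * eps ^+ 2 * (Dc ^+ 2 * Hc ^+ 2 + c%:R * (2 + W * G * Dc ^+ 2) ^+ 2 + 2 + V)
  = n%:R * (eps ^+ 2 * (c%:R * (2 + W * G * Dc ^+ 2) ^+ 2)) + n%:R * (eps ^+ 2 * (2 + V))
    + n%:R * (Dc * Hc * eps) ^+ 2 by ring.
have E2 : n%:R * (c%:R * (G * Dc ^+ 2 * eps * W) ^+ 2) =
  n%:R * (eps ^+ 2 * (c%:R * (W * G * Dc ^+ 2) ^+ 2)) by ring.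
rewrite E E2; apply: lerD => //; apply: lerD => //.
apply: ler_wpM2l => //; apply: ler_wpM2l; first exact: sqr_ge0.
by apply: ler_wpM2l.
Qed.
End M.
Section F.
Variable R : realType.
Lemma final_alg (P K eps beta al Q : R) : 0 <= P -> 0 <= K -> 0 < eps -> 0 < beta ->
  0 < al -> al < 1 / 4 -> 0 < Q ->
  (eps / beta * P + 3 * eps * (1 + eps) * K) / (2 * (al / Q) * (1 - al)) <=
  Q * (1 + eps) / (2 * (1 - 4 * al) * al * beta) * P * eps
  + Q * (4 * eps + 3) / (2 * al * (1 - 4 * al)) * K * eps.
Proof.
move=> P0 K0 e0 b0 a0 a4 Q0.
have a1 : 0 < 1 - al by lra.
have a41 : 0 < 1 - 4 * al by lra.
have -> : (eps / beta * P + 3 * eps * (1 + eps) * K) / (2 * (al / Q) * (1 - al)) =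
  Q / (2 * al) * (eps / beta * P * (1 - al)^-1 + eps * K * (3 * (1 + eps) / (1 - al))).
  by field; rewrite !gt_eqF.
have -> : Q * (1 + eps) / (2 * (1 - 4 * al) * al * beta) * P * eps
  + Q * (4 * eps + 3) / (2 * al * (1 - 4 * al)) * K * eps =
  Q / (2 * al) * (eps / beta * P * ((1 + eps) / (1 - 4 * al)) + eps * K * ((4 * eps + 3) / (1 - 4 * al))).
  by field; rewrite !gt_eqF.
apply: ler_wpM2l; first by rewrite divr_ge0 // ltW // mulr_gt0.
apply: lerD; apply: ler_wpM2l.
- by rewrite mulr_ge0 // divr_ge0 // ltW.
- rewrite -[X in X <= _]mul1r ler_pdivrMr // mulrAC ler_pdivlMr //; nra.
- by rewrite mulr_ge0 // ltW.
- rewrite ler_pdivrMr // mulrAC ler_pdivlMr //; nra.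
Qed.
End F.
Unset Implicit Arguments.
Theorem theorem2 (R : realType) (n c d : nat)
  (h : 'I_n -> 'cV[R]_d -> 'cV[R]_c) (phi : 'I_n -> 'cV[R]_c -> R)
  (hstar : 'I_n -> 'cV[R]_c)
  (Lphi G V Hc eps beta Dc alpha : R) (T : nat)
  (w v vreg : nat -> 'cV[R]_d) :
  (0 < n)%N -> (0 < c)%N -> (0 < d)%N ->
  0 < Lphi -> 0 < G -> 0 < V -> 0 < Hc ->
  0 < eps -> 0 < beta -> T%:R = beta / eps ->
  0 < Dc -> 0 < alpha -> alpha < 1 / 4 ->
  (* h_i^* is a minimizer of phi_i *)
  (forall i z, phi i (hstar i) <= phi i z) ->
  (* Assumption A *)
  (forall i, convex_fn (phi i) /\ bounded_below (phi i) /\ L_smooth Lphi (phi i)) ->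
  (* Assumption B *)
  (forall i (j : 'I_c), twice_cont_diff (fun x => h i x j 0)) ->
  (forall i (j : 'I_c) x, opnorm (hessian_mx (fun y => h i y j 0) x) <= G) ->
  (* Algorithm 2, with eta^(t) = Dc sqrt eps, alpha_i^(t) = (1+eps)^t alpha/(e^beta Lphi) *)
  (forall t, (t < T)%N -> forall u,
     PsiT h phi eps (Dc * Num.sqrt eps)
       (fun _ => (1 + eps) ^+ t * (alpha / (expR beta * Lphi))) (w t) (vreg t)
     <= PsiT h phi eps (Dc * Num.sqrt eps)
       (fun _ => (1 + eps) ^+ t * (alpha / (expR beta * Lphi))) (w t) u) ->
  (forall t, (t < T)%N -> enorm (v t - vreg t) <= eps) ->
  (forall t, (t < T)%N -> w t.+1 = w t - (Dc * Num.sqrt eps) *: v t) ->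
  (* Assumption C *)
  (forall t, (t < T)%N -> exists vh : 'cV[R]_d, sqnorm vh <= V /\
     PhiT h phi (Dc * Num.sqrt eps)
       (fun _ => (1 + eps) ^+ t * (alpha / (expR beta * Lphi))) (w t) vh <= eps ^+ 2) ->
  (* Assumption D *)
  (forall i t, (t < T)%N -> opnorm (jacobian_mx (h i) (w t)) <= Hc / Num.sqrt eps) ->
  (T%:R)^-1 * \sum_(t < T) (Fobj h phi (w t) - inf (range (Fobj h phi)))
  <= expR beta * Lphi * (1 + eps) / (2 * (1 - 4 * alpha) * alpha * beta)
       * ((n%:R)^-1 * \sum_(i < n) sqnorm (h i (w 0%N) - hstar i)) * eps
   + expR beta * Lphi * (4 * eps + 3) / (2 * alpha * (1 - 4 * alpha))
       * (Dc ^+ 2 * Hc ^+ 2 + c%:R * (2 + (V + eps ^+ 2 + 2) * G * Dc ^+ 2) ^+ 2 + 2 + V)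
       * eps.
Proof.
move=> n0 c0 d0 L0 G0 V0 H0 e0 b0 Teq D0 a0 a4 Hmin HA HB HG Hreg Hv Hw HC HD.
set A0 := alpha / (expR beta * Lphi).
set q := 1 + eps.
set K := (Dc ^+ 2 * Hc ^+ 2 + c%:R * (2 + (V + eps ^+ 2 + 2) * G * Dc ^+ 2) ^+ 2 + 2 + V).
have Q0 : 0 < expR beta * Lphi by rewrite mulr_gt0 // expR_gt0.
have A0p : 0 < A0 by rewrite divr_gt0.
have q1 : 1 <= q by rewrite lerDl ltW.
have q0 : 0 < q by exact: lt_le_trans ltr01 q1.
have TE : T%:R * eps = beta by rewrite Teq mulfVK // gt_eqF.
have Tp : 0 < T%:R :> R by rewrite Teq divr_gt0.
have qt : forall t, (t <= T)%N -> q ^+ t * A0 * Lphi <= alpha.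
  move=> t tT.
  have h1 : q ^+ t <= expR beta.
    apply: (le_trans (pow_le_exp t (ltW e0))); rewrite ler_expR -TE.
    by apply: ler_wpM2r; [exact: ltW | rewrite ler_nat].
  have -> : q ^+ t * A0 * Lphi = q ^+ t / expR beta * alpha.
    by rewrite /A0; field; rewrite !gt_eqF ?expR_gt0.
  rewrite -[X in _ <= X]mul1r; apply: ler_wpM2r; first exact: ltW.
  by rewrite ler_pdivrMr ?expR_gt0 // mul1r.
pose sq t := \sum_(i < n) sqnorm (h i (w t) - hstar i).
pose Dl t := \sum_(i < n) (phi i (h i (w t)) - phi i (hstar i)).
set C := (1 + eps^-1) * (3 * (n%:R * eps ^+ 2 * K)).
have key : forall t, (t < T)%N ->
  sq t.+1 <= q * (sq t - 2 * (q ^+ t * A0) * (1 - alpha) * Dl t) + C.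
  move=> t tT.
  apply: (key_step (Lphi := Lphi) (G := G) (V := V) (Hc := Hc) (Dc := Dc) (wt := w t) (vt := v t) (vregt := vreg t)) => //.
  - by rewrite mulr_gt0 // exprn_gt0.
  - exact: qt (ltnW tT).
  - exact: Hreg.
  - exact: Hv.
  - exact: Hw.
  - exact: HC.
  - by move=> i; exact: HD.
pose E t := sq t / q ^+ t.
have qtp : forall t, 0 < q ^+ t by move=> t; rewrite exprn_gt0.
have K0 : 0 <= K.
  have t1 : 0 <= Dc ^+ 2 * Hc ^+ 2 by rewrite mulr_ge0 ?sqr_ge0.
  have t2 : 0 <= c%:R * (2 + (V + eps ^+ 2 + 2) * G * Dc ^+ 2) ^+ 2 by rewrite mulr_ge0 ?sqr_ge0 ?ler0n.
  rewrite /K; lra.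
have C0 : 0 <= C.
  rewrite /C; apply: mulr_ge0; first by rewrite addr_ge0 // invr_ge0 ltW.
  apply: mulr_ge0 => //; apply: mulr_ge0 => //; by rewrite mulr_ge0 ?sqr_ge0.
have step : forall t, (t < T)%N -> E t.+1 <= E t - (2 * A0 * (1 - alpha)) * Dl t + C.
  move=> t tT; rewrite /E.
  have Ht := key t tT.
  have H1 : sq t.+1 / q ^+ t.+1 <= (q * (sq t - 2 * (q ^+ t * A0) * (1 - alpha) * Dl t) + C) / q ^+ t.+1.
    by rewrite ler_pM2r ?invr_gt0.
  apply: (le_trans H1).
  have -> : (q * (sq t - 2 * (q ^+ t * A0) * (1 - alpha) * Dl t) + C) / q ^+ t.+1
     = sq t / q ^+ t - 2 * A0 * (1 - alpha) * Dl t + C / q ^+ t.+1.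
    by rewrite exprS; field; rewrite !gt_eqF.
  rewrite lerD2l ler_pdivrMr // ler_peMr //.
  by rewrite exprn_ege1.
have tel := telescope step.
have ET : 0 <= E T.
  rewrite /E; apply: divr_ge0; last exact: ltW.
  by apply: sumr_ge0 => i _; exact: sqnorm_ge0.
have E0 : E 0%N = sq 0%N by rewrite /E expr0 divr1.
have nR : 0 < n%:R :> R by rewrite ltr0n.
have Hinf : n%:R^-1 * \sum_(i < n) phi i (hstar i) <= inf (range (Fobj h phi)).
  apply: lb_le_inf; first by exists (Fobj h phi 0); exists 0.
  move=> _ [x _ <-]; rewrite /Fobj; apply: ler_wpM2l; first by rewrite invr_ge0 ltW.
  by apply: ler_sum => i _; exact: Hmin.
have Hgap : forall t, Fobj h phi (w t) - inf (range (Fobj h phi)) <= n%:R^-1 * Dl t.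
  move=> t; apply: (le_trans (lerB (lexx _) Hinf)).
  by rewrite /Fobj /Dl sumrB mulrBr.
have a1 : 0 < 1 - alpha by clear -a4; lra.
have c1 : 0 < 2 * A0 * (1 - alpha) by apply: mulr_gt0 => //; apply: mulr_gt0.
apply: (le_trans (y := T%:R^-1 * (n%:R^-1 * \sum_(t < T) Dl t))).
  apply: ler_wpM2l; first by rewrite invr_ge0 ltW.
  by rewrite mulr_sumr; apply: ler_sum => t _; exact: Hgap.
have HS : \sum_(t < T) Dl t <= (sq 0%N + T%:R * C) / (2 * A0 * (1 - alpha)).
  rewrite ler_pdivlMr // mulrC. lra.
apply: (le_trans (y := T%:R^-1 * (n%:R^-1 * ((sq 0%N + T%:R * C) / (2 * A0 * (1 - alpha)))))).
  apply: ler_wpM2l; first by rewrite invr_ge0 ltW.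
  by apply: ler_wpM2l; first by rewrite invr_ge0 ltW.
have -> : T%:R^-1 * (n%:R^-1 * ((sq 0%N + T%:R * C) / (2 * A0 * (1 - alpha)))) =
  (eps / beta * (n%:R^-1 * sq 0%N) + 3 * eps * (1 + eps) * K) / (2 * (alpha / (expR beta * Lphi)) * (1 - alpha)).
  rewrite /C /A0 Teq; field.
  rewrite !gt_eqF ?expR_gt0 //; lra.
apply: final_alg => //.
- apply: mulr_ge0; first by rewrite invr_ge0 ltW.
  by apply: sumr_ge0 => i _; exact: sqnorm_ge0.
Qed.
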